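(* Let an $m\times n$ net in $I^3$ have all its faces in non-isotropic planes. Then the net is deformable if and only if its top view is deformable.
   Context: $I^3$ is $\mathbb{R}^3$ with coordinates $(x,y,z)$; a plane is isotropic if parallel to the $z$-axis; the top view of a point $(x,y,z)$ is $(x,y)$, and the top view of a net is the planar net of top views of its vertices. An $m\times n$ net: points $F_{ij}$, $0\le i\le m,0\le j\le n$, with $F_{ij},F_{i+1,j},F_{i+1,j+1},F_{i,j+1}$ consecutive vertices of a convex planar quadrilateral (face) for all $0\le i<m,0\le j<n$. Two nets are parallel (Combescure transformations of each other) if corresponding edges are parallel. A net is deformable if it is contained in a continuous family of pairwise non-congruent (in the Euclidean or isotropic sense) parallel nets with the same areas of corresponding faces. Isotropic congruences are maps $\mathbf{x}\mapsto A\mathbf{x}+\mathbf{b}$, $A=\begin{pmatrix}\cos\phi&-\sin\phi&0\\ \sin\phi&\cos\phi&0\\ c_1&c_2&1\end{pmatrix}$. *)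

(* Defs.v *)
From Stdlib Require Import Reals Lra Lia.
Open Scope R_scope.

(* Points of R^3 (= I^3) and of R^2. *)
Record pt3 := P3 { px : R; py : R; pz : R }.
Record pt2 := P2 { qx : R; qy : R }.

Definition sub3 (p q : pt3) : pt3 := P3 (px p - px q) (py p - py q) (pz p - pz q).
Definition scal3 (l : R) (p : pt3) : pt3 := P3 (l * px p) (l * py p) (l * pz p).
Definition dot3 (p q : pt3) : R := px p * px q + py p * py q + pz p * pz q.
Definition cross3 (p q : pt3) : pt3 :=
  P3 (py p * pz q - pz p * py q) (pz p * px q - px p * pz q) (px p * py q - py p * px q).
Definition det3 (a b c : pt3) : R := dot3 a (cross3 b c).

Definition sub2 (p q : pt2) : pt2 := P2 (qx p - qx q) (qy p - qy q).
Definition scal2 (l : R) (p : pt2) : pt2 := P2 (l * qx p) (l * qy p).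
Definition cross2 (p q : pt2) : R := qx p * qy q - qy p * qx q.

(* A net: values F i j only matter for 0 <= i <= m, 0 <= j <= n. *)
Definition net3 := nat -> nat -> pt3.
Definition net2 := nat -> nat -> pt2.

(* p0 p1 p2 p3 are consecutive vertices of a convex planar quadrilateral in R^3:
   coplanar, and all four turning vectors (cross products of consecutive edges)
   are nonzero and point to the same side of the plane (strict convexity of a
   genuine quadrilateral). *)
Definition convex_quad3 (p0 p1 p2 p3 : pt3) : Prop :=
  let e0 := sub3 p1 p0 in let e1 := sub3 p2 p1 in
  let e2 := sub3 p3 p2 in let e3 := sub3 p0 p3 in
  let c0 := cross3 e0 e1 in
  det3 (sub3 p1 p0) (sub3 p2 p0) (sub3 p3 p0) = 0 /\
  0 < dot3 c0 c0 /\
  0 < dot3 c0 (cross3 e1 e2) /\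
  0 < dot3 c0 (cross3 e2 e3) /\
  0 < dot3 c0 (cross3 e3 e0).

Definition convex_quad2 (p0 p1 p2 p3 : pt2) : Prop :=
  let e0 := sub2 p1 p0 in let e1 := sub2 p2 p1 in
  let e2 := sub2 p3 p2 in let e3 := sub2 p0 p3 in
  let c0 := cross2 e0 e1 in
  0 < c0 * c0 /\
  0 < c0 * cross2 e1 e2 /\
  0 < c0 * cross2 e2 e3 /\
  0 < c0 * cross2 e3 e0.

Definition is_net3 (m n : nat) (F : net3) : Prop :=
  forall i j, (i < m)%nat -> (j < n)%nat ->
    convex_quad3 (F i j) (F (S i) j) (F (S i) (S j)) (F i (S j)).

Definition is_net2 (m n : nat) (F : net2) : Prop :=
  forall i j, (i < m)%nat -> (j < n)%nat ->
    convex_quad2 (F i j) (F (S i) j) (F (S i) (S j)) (F i (S j)).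

(* The plane of face (i,j) is non-isotropic (not parallel to the z-axis):
   its normal vector, the cross product of two consecutive edges, has a
   nonzero z-component. *)
Definition face_nonisotropic (F : net3) (i j : nat) : Prop :=
  pz (cross3 (sub3 (F (S i) j) (F i j)) (sub3 (F (S i) (S j)) (F (S i) j))) <> 0.

Definition top (p : pt3) : pt2 := P2 (px p) (py p).
Definition top_view (F : net3) : net2 := fun i j => top (F i j).

(* Euclidean area of a planar quadrilateral (shoelace formula). *)
Definition area2 (p0 p1 p2 p3 : pt2) : R :=
  Rabs ((cross2 p0 p1 + cross2 p1 p2 + cross2 p2 p3 + cross2 p3 p0) / 2).

(* Area of face (i,j) of a planar net; the isotropic area of a face of a
   net in I^3 is the Euclidean area of its top view. *)
Definition face_area2 (F : net2) (i j : nat) : R :=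
  area2 (F i j) (F (S i) j) (F (S i) (S j)) (F i (S j)).
Definition face_area_iso (F : net3) (i j : nat) : R :=
  face_area2 (top_view F) i j.

Definition parallel3 (m n : nat) (F G : net3) : Prop :=
  (forall i j, (i < m)%nat -> (j <= n)%nat ->
     exists l, sub3 (G (S i) j) (G i j) = scal3 l (sub3 (F (S i) j) (F i j))) /\
  (forall i j, (i <= m)%nat -> (j < n)%nat ->
     exists l, sub3 (G i (S j)) (G i j) = scal3 l (sub3 (F i (S j)) (F i j))).

Definition parallel2 (m n : nat) (F G : net2) : Prop :=
  (forall i j, (i < m)%nat -> (j <= n)%nat ->
     exists l, sub2 (G (S i) j) (G i j) = scal2 l (sub2 (F (S i) j) (F i j))) /\
  (forall i j, (i <= m)%nat -> (j < n)%nat ->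
     exists l, sub2 (G i (S j)) (G i j) = scal2 l (sub2 (F i (S j)) (F i j))).

Definition same_areas_iso (m n : nat) (F G : net3) : Prop :=
  forall i j, (i < m)%nat -> (j < n)%nat -> face_area_iso F i j = face_area_iso G i j.

Definition same_areas2 (m n : nat) (F G : net2) : Prop :=
  forall i j, (i < m)%nat -> (j < n)%nat -> face_area2 F i j = face_area2 G i j.

Definition iso_congr_map (phi c1 c2 : R) (b : pt3) (p : pt3) : pt3 :=
  P3 (cos phi * px p - sin phi * py p + px b)
     (sin phi * px p + cos phi * py p + py b)
     (c1 * px p + c2 * py p + pz p + pz b).

Definition iso_congruent (m n : nat) (F G : net3) : Prop :=
  exists phi c1 c2 b, forall i j, (i <= m)%nat -> (j <= n)%nat ->
    G i j = iso_congr_map phi c1 c2 b (F i j).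

Definition eucl_congruent2 (m n : nat) (F G : net2) : Prop :=
  exists a11 a12 a21 a22 b1 b2,
    a11 * a11 + a21 * a21 = 1 /\ a12 * a12 + a22 * a22 = 1 /\
    a11 * a12 + a21 * a22 = 0 /\
    forall i j, (i <= m)%nat -> (j <= n)%nat ->
      G i j = P2 (a11 * qx (F i j) + a12 * qy (F i j) + b1)
                 (a21 * qx (F i j) + a22 * qy (F i j) + b2).

(* Continuity is required on all of R, which
   is harmless (a continuous family on [a,b] extends constantly). *)
Definition deformable_iso (m n : nat) (F : net3) : Prop :=
  exists (P : R -> net3) (a b t0 : R),
    (forall i j, continuity (fun t => px (P t i j)) /\
                 continuity (fun t => py (P t i j)) /\
                 continuity (fun t => pz (P t i j))) /\
    a < b /\ a <= t0 <= b /\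
    (forall i j, (i <= m)%nat -> (j <= n)%nat -> P t0 i j = F i j) /\
    (forall t, a <= t <= b -> is_net3 m n (P t)) /\
    (forall s t, a <= s <= b -> a <= t <= b ->
       parallel3 m n (P s) (P t) /\ same_areas_iso m n (P s) (P t) /\
       (s <> t -> ~ iso_congruent m n (P s) (P t))).

Definition deformable2 (m n : nat) (F : net2) : Prop :=
  exists (P : R -> net2) (a b t0 : R),
    (forall i j, continuity (fun t => qx (P t i j)) /\
                 continuity (fun t => qy (P t i j))) /\
    a < b /\ a <= t0 <= b /\
    (forall i j, (i <= m)%nat -> (j <= n)%nat -> P t0 i j = F i j) /\
    (forall t, a <= t <= b -> is_net2 m n (P t)) /\
    (forall s t, a <= s <= b -> a <= t <= b ->
       parallel2 m n (P s) (P t) /\ same_areas2 m n (P s) (P t) /\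
       (s <> t -> ~ eucl_congruent2 m n (P s) (P t))).

(* Main.v *)
Require Import Defs.
From Stdlib Require Import Reals Lra Lia Psatz.
Open Scope R_scope.

Lemma pt3_eq (p q : pt3) : px p = px q -> py p = py q -> pz p = pz q -> p = q.
Proof. destruct p, q; simpl; intros; subst; reflexivity. Qed.
Lemma pt2_eq (p q : pt2) : qx p = qx q -> qy p = qy q -> p = q.
Proof. destruct p, q; simpl; intros; subst; reflexivity. Qed.

Lemma ident_k (p0 p1 p2 p3 : pt3) :
  dot3 (cross3 (sub3 p1 p0) (sub3 p2 p1)) (cross3 (sub3 p1 p0) (sub3 p2 p1)) * pz (cross3 (sub3 p2 p1) (sub3 p3 p2))
  - dot3 (cross3 (sub3 p1 p0) (sub3 p2 p1)) (cross3 (sub3 p2 p1) (sub3 p3 p2)) * pz (cross3 (sub3 p1 p0) (sub3 p2 p1))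
  + det3 (sub3 p1 p0) (sub3 p2 p0) (sub3 p3 p0) * pz (cross3 (cross3 (sub3 p1 p0) (sub3 p2 p1)) (sub3 p2 p1)) = 0 /\
  dot3 (cross3 (sub3 p1 p0) (sub3 p2 p1)) (cross3 (sub3 p1 p0) (sub3 p2 p1)) * pz (cross3 (sub3 p3 p2) (sub3 p0 p3))
  - dot3 (cross3 (sub3 p1 p0) (sub3 p2 p1)) (cross3 (sub3 p3 p2) (sub3 p0 p3)) * pz (cross3 (sub3 p1 p0) (sub3 p2 p1))
  + det3 (sub3 p1 p0) (sub3 p2 p0) (sub3 p3 p0) * pz (cross3 (cross3 (sub3 p1 p0) (sub3 p2 p1)) (sub3 p2 p0)) = 0 /\
  dot3 (cross3 (sub3 p1 p0) (sub3 p2 p1)) (cross3 (sub3 p1 p0) (sub3 p2 p1)) * pz (cross3 (sub3 p0 p3) (sub3 p1 p0))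
  - dot3 (cross3 (sub3 p1 p0) (sub3 p2 p1)) (cross3 (sub3 p0 p3) (sub3 p1 p0)) * pz (cross3 (sub3 p1 p0) (sub3 p2 p1))
  + det3 (sub3 p1 p0) (sub3 p2 p0) (sub3 p3 p0) * pz (cross3 (cross3 (sub3 p1 p0) (sub3 p2 p1)) (sub3 p1 p0)) = 0.
Proof.
  destruct p0 as [x0 y0 z0], p1 as [x1 y1 z1], p2 as [x2 y2 z2], p3 as [x3 y3 z3]. unfold det3, sub3, dot3, cross3; simpl.
  split; [|split]; ring.
Qed.

Lemma real_aux (N z0 zk d : R) : 0 < N -> z0 <> 0 -> N*zk - d*z0 = 0 -> (0 < d <-> 0 < z0*zk).
Proof.
  intros HN Hz E.
  assert (E2 : N*(z0*zk) = d*(z0*z0)).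
  { replace (N*(z0*zk)) with (z0*(N*zk)) by ring. replace (N*zk) with (d*z0) by lra. ring. }
  assert (Hzz : 0 < z0*z0) by nra.
  split; intro H.
  - apply (Rmult_lt_reg_l N); [exact HN|]. rewrite Rmult_0_r, E2. nra.
  - apply (Rmult_lt_reg_r (z0*z0)); [exact Hzz|]. rewrite Rmult_0_l, <- E2. nra.
Qed.

Lemma quad_equiv p0 p1 p2 p3 :
  det3 (sub3 p1 p0) (sub3 p2 p0) (sub3 p3 p0) = 0 ->
  pz (cross3 (sub3 p1 p0) (sub3 p2 p1)) <> 0 ->
  (convex_quad3 p0 p1 p2 p3 <-> convex_quad2 (top p0) (top p1) (top p2) (top p3)).
Proof.
  intros HD Hz.
  destruct (ident_k p0 p1 p2 p3) as [K1 [K2 K3]].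
  rewrite HD, Rmult_0_l, Rplus_0_r in K1, K2, K3.
  set (c0 := cross3 (sub3 p1 p0) (sub3 p2 p1)) in *.
  assert (HN : 0 < dot3 c0 c0).
  { unfold dot3. assert (0 < pz c0 * pz c0) by nra. nra. }
  unfold convex_quad3, convex_quad2. cbv zeta.
  change (cross2 (sub2 (top p1) (top p0)) (sub2 (top p2) (top p1))) with (pz c0).
  change (cross2 (sub2 (top p2) (top p1)) (sub2 (top p3) (top p2))) with (pz (cross3 (sub3 p2 p1) (sub3 p3 p2))).
  change (cross2 (sub2 (top p3) (top p2)) (sub2 (top p0) (top p3))) with (pz (cross3 (sub3 p3 p2) (sub3 p0 p3))).
  change (cross2 (sub2 (top p0) (top p3)) (sub2 (top p1) (top p0))) with (pz (cross3 (sub3 p0 p3) (sub3 p1 p0))).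
  fold c0.
  split.
  - intros [_ [_ [H1 [H2 H3]]]]. split; [nra|].
    split; [exact (proj1 (real_aux _ _ _ _ HN Hz K1) H1)|].
    split; [exact (proj1 (real_aux _ _ _ _ HN Hz K2) H2)|].
    exact (proj1 (real_aux _ _ _ _ HN Hz K3) H3).
  - intros [_ [H1 [H2 H3]]]. split; [exact HD|]. split; [exact HN|].
    split; [exact (proj2 (real_aux _ _ _ _ HN Hz K1) H1)|].
    split; [exact (proj2 (real_aux _ _ _ _ HN Hz K2) H2)|].
    exact (proj2 (real_aux _ _ _ _ HN Hz K3) H3).
Qed.

Definition n2 (p : pt2) := qx p * qx p + qy p * qy p.

Lemma cross_nz e f : cross2 e f <> 0 -> 0 < n2 e /\ 0 < n2 f.
Proof.
  unfold cross2, n2. intros H. split.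
  - destruct (Rle_or_lt (qx e * qx e + qy e * qy e) 0) as [Hle|Hlt]; [|exact Hlt].
    exfalso. apply H. assert (A : qx e = 0) by nra. assert (B : qy e = 0) by nra.
    rewrite A, B; ring.
  - destruct (Rle_or_lt (qx f * qx f + qy f * qy f) 0) as [Hle|Hlt]; [|exact Hlt].
    exfalso. apply H. assert (A : qx f = 0) by nra. assert (B : qy f = 0) by nra.
    rewrite A, B; ring.
Qed.

Lemma quad2_edges p0 p1 p2 p3 : convex_quad2 p0 p1 p2 p3 ->
  0 < n2 (sub2 p1 p0) /\ 0 < n2 (sub2 p2 p1) /\ 0 < n2 (sub2 p3 p2) /\ 0 < n2 (sub2 p0 p3).
Proof.
  intros [H0 [H1 [H2 H3]]].
  assert (A : cross2 (sub2 p1 p0) (sub2 p2 p1) <> 0) by (intro E; rewrite E in H0; lra).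
  assert (B : cross2 (sub2 p3 p2) (sub2 p0 p3) <> 0)
    by (intro E; rewrite E, Rmult_0_r in H2; lra).
  destruct (cross_nz _ _ A), (cross_nz _ _ B). tauto.
Qed.

Lemma n2_sub_sym a b : n2 (sub2 a b) = n2 (sub2 b a).
Proof. unfold n2, sub2; simpl; ring. Qed.

Lemma net2_h_nz m n (Q : net2) : (0<m)%nat -> (0<n)%nat -> is_net2 m n Q ->
  forall i j, (i<m)%nat -> (j<=n)%nat -> 0 < n2 (sub2 (Q (S i) j) (Q i j)).
Proof.
  intros Hm Hn HQ i j Hi Hj.
  destruct (Nat.lt_ge_cases j n) as [Hjn|Hjn].
  - destruct (quad2_edges _ _ _ _ (HQ i j Hi Hjn)) as [H _]. exact H.
  - destruct j as [|j']; [lia|].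
    destruct (quad2_edges _ _ _ _ (HQ i j' Hi ltac:(lia))) as [_ [_ [H _]]].
    rewrite n2_sub_sym. exact H.
Qed.

Lemma net2_v_nz m n (Q : net2) : (0<m)%nat -> (0<n)%nat -> is_net2 m n Q ->
  forall i j, (i<=m)%nat -> (j<n)%nat -> 0 < n2 (sub2 (Q i (S j)) (Q i j)).
Proof.
  intros Hm Hn HQ i j Hi Hj.
  destruct (Nat.lt_ge_cases i m) as [Him|Him].
  - destruct (quad2_edges _ _ _ _ (HQ i j Him Hj)) as [_ [_ [_ H]]].
    rewrite n2_sub_sym. exact H.
  - destruct i as [|i']; [lia|].
    destruct (quad2_edges _ _ _ _ (HQ i' j ltac:(lia) Hj)) as [_ [H _]]. exact H.
Qed.

Lemma top_net m n (F : net3) : is_net3 m n F ->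
  (forall i j, (i<m)%nat -> (j<n)%nat -> face_nonisotropic F i j) -> is_net2 m n (top_view F).
Proof.
  intros HF Hiso i j Hi Hj.
  pose proof (HF i j Hi Hj) as Hq.
  destruct (HF i j Hi Hj) as [HD _].
  exact (proj1 (quad_equiv _ _ _ _ HD (Hiso i j Hi Hj)) Hq).
Qed.

Lemma cross_scal a b u v : cross3 (scal3 a u) (scal3 b v) = scal3 (a*b) (cross3 u v).
Proof. apply pt3_eq; unfold cross3, scal3; simpl; ring. Qed.

Lemma nonisotropic_transfer (F G : net3) i j l1 l2 :
  sub3 (G (S i) j) (G i j) = scal3 l1 (sub3 (F (S i) j) (F i j)) ->
  sub3 (G (S i) (S j)) (G (S i) j) = scal3 l2 (sub3 (F (S i) (S j)) (F (S i) j)) ->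
  0 < dot3 (cross3 (sub3 (G (S i) j) (G i j)) (sub3 (G (S i) (S j)) (G (S i) j)))
           (cross3 (sub3 (G (S i) j) (G i j)) (sub3 (G (S i) (S j)) (G (S i) j))) ->
  face_nonisotropic F i j -> face_nonisotropic G i j.
Proof.
  unfold face_nonisotropic. intros E1 E2 Hd Hz. rewrite E1, E2 in *. rewrite cross_scal in *.
  simpl. intro H. apply Rmult_integral in H. destruct H as [H|H]; [|contradiction].
  unfold dot3 in Hd; simpl in Hd. rewrite H in Hd. lra.
Qed.

Lemma cconst (c : R) : continuity (fun _ => c).
Proof. apply continuity_const. intros x y. reflexivity. Qed.
Lemma cplus f g : continuity f -> continuity g -> continuity (fun x => f x + g x).
Proof. intros; apply (continuity_plus f g); assumption. Qed.
Lemma cminus f g : continuity f -> continuity g -> continuity (fun x => f x - g x).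
Proof. intros; apply (continuity_minus f g); assumption. Qed.
Lemma cmult f g : continuity f -> continuity g -> continuity (fun x => f x * g x).
Proof. intros; apply (continuity_mult f g); assumption. Qed.

Lemma ivt_ab (f : R -> R) a b s t : continuity f -> a <= s <= b -> a <= t <= b ->
  0 < f s -> f t < 0 -> exists r, a <= r <= b /\ f r = 0.
Proof.
  intros Cf Hs Ht Fs Ft.
  destruct (Rtotal_order s t) as [st|[st|st]].
  - destruct (IVT (fun x => - f x) s t (continuity_opp f Cf) st) as [r [Hr Er]];
      [cbv beta; lra|cbv beta; lra|].
    exists r; split; [lra|lra].
  - subst; lra.
  - destruct (IVT f t s Cf st Ft Fs) as [r [Hr Er]]. exists r; split; [lra|exact Er].
Qed.

Lemma rigid_edge (U : R -> pt3) (a b s t a11 a12 a21 a22 : R) :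
  continuity (fun r => px (U r)) /\ continuity (fun r => py (U r)) /\ continuity (fun r => pz (U r)) ->
  a <= s <= b -> a <= t <= b ->
  (forall r, a <= r <= b -> exists k, U r = scal3 k (U s)) ->
  (forall r, a <= r <= b -> 0 < px (U r) * px (U r) + py (U r) * py (U r)) ->
  a11*a11 + a21*a21 = 1 -> a12*a12 + a22*a22 = 1 -> a11*a12 + a21*a22 = 0 ->
  px (U t) = a11 * px (U s) + a12 * py (U s) ->
  py (U t) = a21 * px (U s) + a22 * py (U s) ->
  U t = U s.
Proof.
  intros [Cx [Cy Cz]] Hs Ht Hpar Hpos O1 O2 O3 Ex Ey.
  destruct (Hpar t Ht) as [k Ek].
  assert (HN := Hpos s Hs).
  assert (Hk : k*k = 1).
  { rewrite Ek in Ex, Ey. simpl in Ex, Ey.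
    set (x := px (U s)) in *. set (y := py (U s)) in *.
    assert (E : (k*k-1)*(x*x+y*y) = x*x*(a11*a11+a21*a21-1) + y*y*(a12*a12+a22*a22-1)
                  + 2*x*y*(a11*a12+a21*a22)).
    { transitivity ((k*x)*(k*x)+(k*y)*(k*y) - (x*x+y*y)); [ring|]. rewrite Ex, Ey. ring. }
    rewrite O1, O2, O3 in E.
    assert (E' : (k*k-1)*(x*x+y*y) = 0) by (rewrite E; ring).
    apply Rmult_integral in E'. destruct E'; lra. }
  assert (Hk2 : (k-1)*(k+1) = 0) by (replace ((k-1)*(k+1)) with (k*k-1) by ring; lra).
  apply Rmult_integral in Hk2. destruct Hk2 as [Hk2|Hk2].
  - assert (k = 1) by lra. subst k. rewrite Ek. apply pt3_eq; simpl; ring.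
  - exfalso. assert (Hkm : k = -1) by lra.
    set (f := fun r => px (U r) * px (U s) + py (U r) * py (U s) + pz (U r) * pz (U s)).
    assert (Cf : continuity f).
    { unfold f. apply cplus; [apply cplus|]; apply cmult; try assumption; apply cconst. }
    assert (Hps : 0 <= pz (U s) * pz (U s)) by nra.
    assert (Fs : 0 < f s) by (unfold f; lra).
    assert (Ft : f t < 0) by (unfold f; rewrite Ek, Hkm; simpl; lra).
    destruct (ivt_ab f a b s t Cf Hs Ht Fs Ft) as [r [Hr Fr]].
    destruct (Hpar r Hr) as [kr Er].
    unfold f in Fr. rewrite Er in Fr. simpl in Fr.
    assert (Hkr : kr * (px (U s) * px (U s) + py (U s) * py (U s) + pz (U s) * pz (U s)) = 0)
      by (rewrite <- Fr; ring).
    apply Rmult_integral in Hkr. destruct Hkr as [Hkr|Hkr]; [|lra].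
    pose proof (Hpos r Hr) as Hp. rewrite Er in Hp. simpl in Hp. rewrite Hkr in Hp. lra.
Qed.

Lemma telesc m n (g h : nat -> nat -> R) :
  (forall i j, (i<m)%nat -> (j<=n)%nat -> g (S i) j - g i j = h (S i) j - h i j) ->
  (forall i j, (i<=m)%nat -> (j<n)%nat -> g i (S j) - g i j = h i (S j) - h i j) ->
  forall i j, (i<=m)%nat -> (j<=n)%nat -> g i j = h i j + (g O O - h O O).
Proof.
  intros Hh Hv.
  assert (C : forall j, (j<=n)%nat -> g O j = h O j + (g O O - h O O)).
  { induction j; intros Hj; [ring|]. specialize (Hv O j ltac:(lia) ltac:(lia)).
    specialize (IHj ltac:(lia)). lra. }
  induction i; intros j Hi Hj; [apply C; lia|].
  specialize (Hh i j ltac:(lia) Hj). specialize (IHi j ltac:(lia) Hj). lra.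
Qed.

Lemma forward m n F : (0<m)%nat -> (0<n)%nat -> is_net3 m n F ->
  (forall i j, (i<m)%nat -> (j<n)%nat -> face_nonisotropic F i j) ->
  deformable_iso m n F -> deformable2 m n (top_view F).
Proof.
  intros Hm Hn HF Hiso [P [a [b [t0 [Hc [Hab [Ht0 [HPt0 [Hnet Hpair]]]]]]]]].
  assert (Hnet2 : forall t, a <= t <= b -> is_net2 m n (top_view (P t))).
  { intros t Ht. apply top_net; [now apply Hnet|].
    intros i j Hi Hj.
    destruct (Hpair t0 t Ht0 Ht) as [[Hph Hpv] _].
    destruct (Hph i j Hi ltac:(lia)) as [l1 E1].
    destruct (Hpv (S i) j ltac:(lia) Hj) as [l2 E2].
    rewrite !HPt0 in E1, E2 by lia.
    apply (nonisotropic_transfer F (P t) i j l1 l2 E1 E2); [|now apply Hiso].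
    destruct (Hnet t Ht i j Hi Hj) as [_ [H _]]. exact H. }
  exists (fun t => top_view (P t)), a, b, t0.
  split; [|split; [exact Hab|split; [exact Ht0|split; [|split; [exact Hnet2|]]]]].
  - intros i j. destruct (Hc i j) as [H1 [H2 _]]. split; [exact H1|exact H2].
  - intros i j Hi Hj. unfold top_view. rewrite HPt0 by assumption. reflexivity.
  - intros s t Hs Ht. destruct (Hpair s t Hs Ht) as [[Hph Hpv] [Har Hnc]].
    split; [split|split; [exact Har|]].
    + intros i j Hi Hj. destruct (Hph i j Hi Hj) as [l E]. exists l.
      assert (E1 := f_equal px E); assert (E2 := f_equal py E); simpl in E1, E2.
      apply pt2_eq; simpl; assumption.
    + intros i j Hi Hj. destruct (Hpv i j Hi Hj) as [l E]. exists l.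
      assert (E1 := f_equal px E); assert (E2 := f_equal py E); simpl in E1, E2.
      apply pt2_eq; simpl; assumption.
    + intros Hst [a11 [a12 [a21 [a22 [b1 [b2 [O1 [O2 [O3 Heq]]]]]]]]].
      apply (Hnc Hst).
      assert (Hh : forall i j, (i<m)%nat -> (j<=n)%nat ->
                sub3 (P t (S i) j) (P t i j) = sub3 (P s (S i) j) (P s i j)).
      { intros i j Hi Hj.
        apply (rigid_edge (fun r => sub3 (P r (S i) j) (P r i j)) a b s t a11 a12 a21 a22);
          try assumption.
        - destruct (Hc (S i) j) as [X1 [Y1 Z1]]; destruct (Hc i j) as [X0 [Y0 Z0]].
          simpl; repeat split; apply cminus; assumption.
        - intros r Hr. destruct (Hpair s r Hs Hr) as [[Hph' _] _]. exact (Hph' i j Hi Hj).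
        - intros r Hr. exact (net2_h_nz m n _ Hm Hn (Hnet2 r Hr) i j Hi Hj).
        - pose proof (f_equal qx (Heq (S i) j ltac:(lia) Hj)) as A1.
          pose proof (f_equal qx (Heq i j ltac:(lia) Hj)) as A0.
          unfold top_view, top in A1, A0. simpl in A1, A0. simpl. lra.
        - pose proof (f_equal qy (Heq (S i) j ltac:(lia) Hj)) as A1.
          pose proof (f_equal qy (Heq i j ltac:(lia) Hj)) as A0.
          unfold top_view, top in A1, A0. simpl in A1, A0. simpl. lra. }
      assert (Hv : forall i j, (i<=m)%nat -> (j<n)%nat ->
                sub3 (P t i (S j)) (P t i j) = sub3 (P s i (S j)) (P s i j)).
      { intros i j Hi Hj.
        apply (rigid_edge (fun r => sub3 (P r i (S j)) (P r i j)) a b s t a11 a12 a21 a22);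
          try assumption.
        - destruct (Hc i (S j)) as [X1 [Y1 Z1]]; destruct (Hc i j) as [X0 [Y0 Z0]].
          simpl; repeat split; apply cminus; assumption.
        - intros r Hr. destruct (Hpair s r Hs Hr) as [[_ Hpv'] _]. exact (Hpv' i j Hi Hj).
        - intros r Hr. exact (net2_v_nz m n _ Hm Hn (Hnet2 r Hr) i j Hi Hj).
        - pose proof (f_equal qx (Heq i (S j) Hi ltac:(lia))) as A1.
          pose proof (f_equal qx (Heq i j Hi ltac:(lia))) as A0.
          unfold top_view, top in A1, A0. simpl in A1, A0. simpl. lra.
        - pose proof (f_equal qy (Heq i (S j) Hi ltac:(lia))) as A1.
          pose proof (f_equal qy (Heq i j Hi ltac:(lia))) as A0.
          unfold top_view, top in A1, A0. simpl in A1, A0. simpl. lra. }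
      assert (Tx := telesc m n (fun i j => px (P t i j)) (fun i j => px (P s i j))
        (fun i j Hi Hj => f_equal px (Hh i j Hi Hj)) (fun i j Hi Hj => f_equal px (Hv i j Hi Hj))).
      assert (Ty := telesc m n (fun i j => py (P t i j)) (fun i j => py (P s i j))
        (fun i j Hi Hj => f_equal py (Hh i j Hi Hj)) (fun i j Hi Hj => f_equal py (Hv i j Hi Hj))).
      assert (Tz := telesc m n (fun i j => pz (P t i j)) (fun i j => pz (P s i j))
        (fun i j Hi Hj => f_equal pz (Hh i j Hi Hj)) (fun i j Hi Hj => f_equal pz (Hv i j Hi Hj))).
      exists 0, 0, 0, (sub3 (P t O O) (P s O O)).
      intros i j Hi Hj. specialize (Tx i j Hi Hj). specialize (Ty i j Hi Hj). specialize (Tz i j Hi Hj).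
      cbv beta in Tx, Ty, Tz.
      unfold iso_congr_map. rewrite cos_0, sin_0.
      apply pt3_eq; simpl; lra.
Qed.

Lemma lin_solve Nx Ny Nz dx dy dz : Nz <> 0 -> Nx*dx + Ny*dy + Nz*dz = 0 ->
  dz = (-Nx/Nz)*dx + (-Ny/Nz)*dy.
Proof.
  intros Hz E. apply (Rmult_eq_reg_l Nz); [|exact Hz].
  replace (Nz * ((-Nx/Nz)*dx + (-Ny/Nz)*dy)) with (-(Nx*dx + Ny*dy)) by (field; exact Hz).
  lra.
Qed.

Lemma plane_pts p0 p1 p2 p3 :
  det3 (sub3 p1 p0) (sub3 p2 p0) (sub3 p3 p0) = 0 ->
  pz (cross3 (sub3 p1 p0) (sub3 p2 p1)) <> 0 ->
  exists al be,
    pz (sub3 p1 p0) = al * px (sub3 p1 p0) + be * py (sub3 p1 p0) /\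
    pz (sub3 p2 p3) = al * px (sub3 p2 p3) + be * py (sub3 p2 p3) /\
    pz (sub3 p3 p0) = al * px (sub3 p3 p0) + be * py (sub3 p3 p0) /\
    pz (sub3 p2 p1) = al * px (sub3 p2 p1) + be * py (sub3 p2 p1).
Proof.
  destruct p0 as [x0 y0 z0], p1 as [x1 y1 z1], p2 as [x2 y2 z2], p3 as [x3 y3 z3].
  unfold det3, dot3, cross3, sub3; simpl. intros HD Hz.
  set (Nx := (y1 - y0) * (z2 - z1) - (z1 - z0) * (y2 - y1)).
  set (Ny := (z1 - z0) * (x2 - x1) - (x1 - x0) * (z2 - z1)).
  set (Nz := (x1 - x0) * (y2 - y1) - (y1 - y0) * (x2 - x1)) in *.
  exists (-Nx/Nz), (-Ny/Nz).
  split; [|split; [|split]]; apply (lin_solve Nx Ny Nz); try exact Hz; unfold Nx, Ny, Nz.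
  - ring.
  - lra.
  - lra.
  - ring.
Qed.

Definition hF (F : net3) i j := sub3 (F (S i) j) (F i j).
Definition vF (F : net3) i j := sub3 (F i (S j)) (F i j).
Definition lam (Qe : pt2) (e : pt3) : R :=
  (qx Qe * px e + qy Qe * py e) / (px e * px e + py e * py e).
Definition lamh (F : net3) (Q : R -> net2) t i j := lam (sub2 (Q t (S i) j) (Q t i j)) (hF F i j).
Definition lamv (F : net3) (Q : R -> net2) t i j := lam (sub2 (Q t i (S j)) (Q t i j)) (vF F i j).
Fixpoint zc (F : net3) (Q : R -> net2) t j :=
  match j with O => pz (F O O) | S j' => zc F Q t j' + lamv F Q t O j' * pz (vF F O j') end.
Fixpoint zr (F : net3) (Q : R -> net2) t i j :=
  match i with O => zc F Q t j | S i' => zr F Q t i' j + lamh F Q t i' j * pz (hF F i' j) end.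
Definition Plift (F : net3) (Q : R -> net2) t i j :=
  P3 (qx (Q t i j)) (qy (Q t i j)) (zr F Q t i j).

Lemma zr_S F Q t i j : zr F Q t (S i) j = zr F Q t i j + lamh F Q t i j * pz (hF F i j).
Proof. reflexivity. Qed.
Lemma zc_S F Q t j : zc F Q t (S j) = zc F Q t j + lamv F Q t O j * pz (vF F O j).
Proof. reflexivity. Qed.
Lemma top_Plift F Q t i j : top (Plift F Q t i j) = Q t i j.
Proof. unfold top, Plift; simpl. destruct (Q t i j); reflexivity. Qed.

Lemma det_scal p0 p1 p2 p3 q0 q1 q2 q3 al be ga :
  sub3 q1 q0 = scal3 al (sub3 p1 p0) -> sub3 q2 q1 = scal3 be (sub3 p2 p1) ->
  sub3 q3 q0 = scal3 ga (sub3 p3 p0) ->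
  det3 (sub3 q1 q0) (sub3 q2 q0) (sub3 q3 q0) = al*be*ga*det3 (sub3 p1 p0) (sub3 p2 p0) (sub3 p3 p0).
Proof.
  destruct p0 as [x0 y0 z0], p1 as [x1 y1 z1], p2 as [x2 y2 z2], p3 as [x3 y3 z3].
  destruct q0 as [u0 v0 w0], q1 as [u1 v1 w1], q2 as [u2 v2 w2], q3 as [u3 v3 w3].
  unfold sub3, scal3; simpl. intros E1 E2 E3.
  injection E1 as A1 B1 C1. injection E2 as A2 B2 C2. injection E3 as A3 B3 C3.
  assert (u1 = u0 + al*(x1-x0)) by lra. subst u1.
  assert (v1 = v0 + al*(y1-y0)) by lra. subst v1.
  assert (w1 = w0 + al*(z1-z0)) by lra. subst w1.
  assert (u2 = u0 + al*(x1-x0) + be*(x2-x1)) by lra. subst u2.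
  assert (v2 = v0 + al*(y1-y0) + be*(y2-y1)) by lra. subst v2.
  assert (w2 = w0 + al*(z1-z0) + be*(z2-z1)) by lra. subst w2.
  assert (u3 = u0 + ga*(x3-x0)) by lra. subst u3.
  assert (v3 = v0 + ga*(y3-y0)) by lra. subst v3.
  assert (w3 = w0 + ga*(z3-z0)) by lra. subst w3.
  unfold det3, dot3, cross3; simpl. ring.
Qed.

Lemma backward m n F : (0<m)%nat -> (0<n)%nat -> is_net3 m n F ->
  (forall i j, (i<m)%nat -> (j<n)%nat -> face_nonisotropic F i j) ->
  deformable2 m n (top_view F) -> deformable_iso m n F.
Proof.
  intros Hm Hn HF Hiso [Q [a [b [t0 [Hc [Hab [Ht0 [HQt0 [Hnet Hpair]]]]]]]]].
  assert (HG := top_net m n F HF Hiso).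
  assert (Gh : forall i j, (i<m)%nat -> (j<=n)%nat ->
     0 < px (hF F i j) * px (hF F i j) + py (hF F i j) * py (hF F i j)).
  { intros i j Hi Hj. exact (net2_h_nz m n _ Hm Hn HG i j Hi Hj). }
  assert (Gv : forall i j, (i<=m)%nat -> (j<n)%nat ->
     0 < px (vF F i j) * px (vF F i j) + py (vF F i j) * py (vF F i j)).
  { intros i j Hi Hj. exact (net2_v_nz m n _ Hm Hn HG i j Hi Hj). }
  assert (Qh : forall t, a <= t <= b -> forall i j, (i<m)%nat -> (j<=n)%nat ->
     qx (Q t (S i) j) - qx (Q t i j) = lamh F Q t i j * px (hF F i j) /\
     qy (Q t (S i) j) - qy (Q t i j) = lamh F Q t i j * py (hF F i j)).
  { intros t Ht i j Hi Hj.
    destruct (Hpair t0 t Ht0 Ht) as [[Hph _] _].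
    destruct (Hph i j Hi Hj) as [k Ek].
    rewrite !HQt0 in Ek by lia.
    assert (Ex := f_equal qx Ek); assert (Ey := f_equal qy Ek).
    unfold top_view, top in Ex, Ey; simpl in Ex, Ey.
    specialize (Gh i j Hi Hj). unfold hF in *; simpl in Gh.
    assert (Hl : lamh F Q t i j = k).
    { unfold lamh, lam, hF. simpl. rewrite Ex, Ey. field. lra. }
    rewrite Hl. simpl. split; assumption. }
  assert (Qv : forall t, a <= t <= b -> forall i j, (i<=m)%nat -> (j<n)%nat ->
     qx (Q t i (S j)) - qx (Q t i j) = lamv F Q t i j * px (vF F i j) /\
     qy (Q t i (S j)) - qy (Q t i j) = lamv F Q t i j * py (vF F i j)).
  { intros t Ht i j Hi Hj.
    destruct (Hpair t0 t Ht0 Ht) as [[_ Hpv] _].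
    destruct (Hpv i j Hi Hj) as [k Ek].
    rewrite !HQt0 in Ek by lia.
    assert (Ex := f_equal qx Ek); assert (Ey := f_equal qy Ek).
    unfold top_view, top in Ex, Ey; simpl in Ex, Ey.
    specialize (Gv i j Hi Hj). unfold vF in *; simpl in Gv.
    assert (Hl : lamv F Q t i j = k).
    { unfold lamv, lam, vF. simpl. rewrite Ex, Ey. field. lra. }
    rewrite Hl. simpl. split; assumption. }
  assert (Lh_nz : forall t, a <= t <= b -> forall i j, (i<m)%nat -> (j<=n)%nat -> lamh F Q t i j <> 0).
  { intros t Ht i j Hi Hj E. destruct (Qh t Ht i j Hi Hj) as [X Y]. rewrite E, Rmult_0_l in X, Y.
    pose proof (net2_h_nz m n (Q t) Hm Hn (Hnet t Ht) i j Hi Hj) as N. unfold n2 in N; simpl in N.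
    rewrite X, Y in N. lra. }
  assert (Lv_nz : forall t, a <= t <= b -> forall i j, (i<=m)%nat -> (j<n)%nat -> lamv F Q t i j <> 0).
  { intros t Ht i j Hi Hj E. destruct (Qv t Ht i j Hi Hj) as [X Y]. rewrite E, Rmult_0_l in X, Y.
    pose proof (net2_v_nz m n (Q t) Hm Hn (Hnet t Ht) i j Hi Hj) as N. unfold n2 in N; simpl in N.
    rewrite X, Y in N. lra. }
  assert (Zv : forall t, a <= t <= b -> forall i j, (i<=m)%nat -> (j<n)%nat ->
     zr F Q t i (S j) - zr F Q t i j = lamv F Q t i j * pz (vF F i j)).
  { intros t Ht i j Hi Hj. induction i as [|i IH].
    - simpl. ring.
    - rewrite !zr_S. specialize (IH ltac:(lia)).
      destruct (HF i j ltac:(lia) Hj) as [HD _].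
      destruct (plane_pts _ _ _ _ HD (Hiso i j ltac:(lia) Hj)) as [al [be [P1 [P2 [P3 P4]]]]].
      fold (hF F i j) (hF F i (S j)) (vF F i j) (vF F (S i) j) in P1, P2, P3, P4.
      destruct (Qh t Ht i j ltac:(lia) ltac:(lia)) as [X1 Y1].
      destruct (Qh t Ht i (S j) ltac:(lia) ltac:(lia)) as [X2 Y2].
      destruct (Qv t Ht i j ltac:(lia) Hj) as [X3 Y3].
      destruct (Qv t Ht (S i) j ltac:(lia) Hj) as [X4 Y4].
      rewrite P1, P2 in *. rewrite P3 in IH. rewrite P4.
      assert (A1 : lamh F Q t i j * (al * px (hF F i j) + be * py (hF F i j)) =
                   al * (qx (Q t (S i) j) - qx (Q t i j)) + be * (qy (Q t (S i) j) - qy (Q t i j)))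
        by (rewrite X1, Y1; ring).
      assert (A2 : lamh F Q t i (S j) * (al * px (hF F i (S j)) + be * py (hF F i (S j))) =
                   al * (qx (Q t (S i) (S j)) - qx (Q t i (S j))) + be * (qy (Q t (S i) (S j)) - qy (Q t i (S j))))
        by (rewrite X2, Y2; ring).
      assert (A3 : lamv F Q t i j * (al * px (vF F i j) + be * py (vF F i j)) =
                   al * (qx (Q t i (S j)) - qx (Q t i j)) + be * (qy (Q t i (S j)) - qy (Q t i j)))
        by (rewrite X3, Y3; ring).
      assert (A4 : lamv F Q t (S i) j * (al * px (vF F (S i) j) + be * py (vF F (S i) j)) =
                   al * (qx (Q t (S i) (S j)) - qx (Q t (S i) j)) + be * (qy (Q t (S i) (S j)) - qy (Q t (S i) j)))
        by (rewrite X4, Y4; ring).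
      lra. }
  assert (PLh : forall t, a <= t <= b -> forall i j, (i<m)%nat -> (j<=n)%nat ->
     sub3 (Plift F Q t (S i) j) (Plift F Q t i j) = scal3 (lamh F Q t i j) (hF F i j)).
  { intros t Ht i j Hi Hj. destruct (Qh t Ht i j Hi Hj) as [X Y].
    apply pt3_eq; unfold Plift, sub3, scal3; cbn [px py pz]; [exact X|exact Y|rewrite zr_S; ring]. }
  assert (PLv : forall t, a <= t <= b -> forall i j, (i<=m)%nat -> (j<n)%nat ->
     sub3 (Plift F Q t i (S j)) (Plift F Q t i j) = scal3 (lamv F Q t i j) (vF F i j)).
  { intros t Ht i j Hi Hj. destruct (Qv t Ht i j Hi Hj) as [X Y].
    apply pt3_eq; unfold Plift, sub3, scal3; cbn [px py pz]; [exact X|exact Y|exact (Zv t Ht i j Hi Hj)]. }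
  assert (L1h : forall i j, (i<m)%nat -> (j<=n)%nat -> lamh F Q t0 i j = 1).
  { intros i j Hi Hj. specialize (Gh i j Hi Hj). unfold lamh, lam. rewrite !HQt0 by lia.
    unfold hF, top_view, top in *. simpl in *. field. lra. }
  assert (L1v : forall i j, (i<=m)%nat -> (j<n)%nat -> lamv F Q t0 i j = 1).
  { intros i j Hi Hj. specialize (Gv i j Hi Hj). unfold lamv, lam. rewrite !HQt0 by lia.
    unfold vF, top_view, top in *. simpl in *. field. lra. }
  assert (zc0 : forall j, (j<=n)%nat -> zc F Q t0 j = pz (F O j)).
  { induction j; intros Hj; [reflexivity|]. rewrite zc_S, IHj by lia. rewrite L1v by lia.
    unfold vF; simpl. ring. }
  assert (zr0 : forall i j, (i<=m)%nat -> (j<=n)%nat -> zr F Q t0 i j = pz (F i j)).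
  { induction i; intros j Hi Hj; [simpl; apply zc0; lia|]. rewrite zr_S, IHi by lia.
    rewrite L1h by lia. unfold hF; simpl. ring. }
  assert (CLh : forall i j, continuity (fun t => lamh F Q t i j)).
  { intros i j. unfold lamh, lam. unfold Rdiv. apply cmult; [|apply cconst].
    destruct (Hc (S i) j) as [X1 Y1]. destruct (Hc i j) as [X0 Y0].
    simpl. apply cplus; apply cmult; try apply cconst; apply cminus; assumption. }
  assert (CLv : forall i j, continuity (fun t => lamv F Q t i j)).
  { intros i j. unfold lamv, lam. unfold Rdiv. apply cmult; [|apply cconst].
    destruct (Hc i (S j)) as [X1 Y1]. destruct (Hc i j) as [X0 Y0].
    simpl. apply cplus; apply cmult; try apply cconst; apply cminus; assumption. }
  assert (Czc : forall j, continuity (fun t => zc F Q t j)).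
  { induction j; [exact (cconst (pz (F O O)))|]. simpl. apply cplus; [exact IHj|]. apply cmult; [apply CLv|apply cconst]. }
  assert (Czr : forall i j, continuity (fun t => zr F Q t i j)).
  { induction i; intros j; [exact (Czc j)|]. simpl. apply cplus; [apply IHi|]. apply cmult; [apply CLh|apply cconst]. }
  exists (Plift F Q), a, b, t0.
  split; [|split; [exact Hab|split; [exact Ht0|split; [|split]]]].
  - intros i j. destruct (Hc i j) as [X Y]. unfold Plift; cbn [px py pz].
    split; [exact X|split; [exact Y|apply Czr]].
  - intros i j Hi Hj. apply pt3_eq; unfold Plift; cbn [px py pz].
    + rewrite HQt0 by lia. reflexivity.
    + rewrite HQt0 by lia. reflexivity.
    + apply zr0; lia.
  - intros t Ht i j Hi Hj.
    destruct (HF i j Hi Hj) as [HDF _].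
    assert (E1 := PLh t Ht i j Hi ltac:(lia)).
    assert (E2 := PLv t Ht (S i) j ltac:(lia) Hj).
    assert (E3 := PLv t Ht i j ltac:(lia) Hj).
    unfold hF, vF in E1, E2, E3.
    assert (HD := det_scal _ _ _ _ _ _ _ _ _ _ _ E1 E2 E3).
    rewrite HDF, Rmult_0_r in HD.
    assert (Hz : pz (cross3 (sub3 (Plift F Q t (S i) j) (Plift F Q t i j))
                            (sub3 (Plift F Q t (S i) (S j)) (Plift F Q t (S i) j))) <> 0).
    { change (cross2 (sub2 (top (Plift F Q t (S i) j)) (top (Plift F Q t i j)))
                     (sub2 (top (Plift F Q t (S i) (S j))) (top (Plift F Q t (S i) j))) <> 0).
      rewrite !top_Plift.
      destruct (Hnet t Ht i j Hi Hj) as [H0 _]. intro E. rewrite E in H0. lra. }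
    apply (proj2 (quad_equiv _ _ _ _ HD Hz)).
    rewrite !top_Plift. exact (Hnet t Ht i j Hi Hj).
  - intros s t Hs Ht. destruct (Hpair s t Hs Ht) as [_ [Har Hnc]].
    split; [split|split].
    + intros i j Hi Hj. exists (lamh F Q t i j / lamh F Q s i j).
      rewrite (PLh t Ht i j Hi Hj), (PLh s Hs i j Hi Hj).
      assert (Hnz := Lh_nz s Hs i j Hi Hj).
      apply pt3_eq; cbn [scal3 px py pz]; field; exact Hnz.
    + intros i j Hi Hj. exists (lamv F Q t i j / lamv F Q s i j).
      rewrite (PLv t Ht i j Hi Hj), (PLv s Hs i j Hi Hj).
      assert (Hnz := Lv_nz s Hs i j Hi Hj).
      apply pt3_eq; cbn [scal3 px py pz]; field; exact Hnz.
    + intros i j Hi Hj. unfold face_area_iso, face_area2, top_view. cbv beta.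
      rewrite !top_Plift. exact (Har i j Hi Hj).
    + intros Hst [phi [c1 [c2 [b0 Heq]]]]. apply (Hnc Hst).
      exists (cos phi), (- sin phi), (sin phi), (cos phi), (px b0), (py b0).
      split; [|split; [|split]].
      * pose proof (sin2_cos2 phi) as SC. unfold Rsqr in SC. nra.
      * pose proof (sin2_cos2 phi) as SC. unfold Rsqr in SC. nra.
      * ring.
      * intros i j Hi Hj. rewrite <- (top_Plift F Q t i j), (Heq i j Hi Hj).
        unfold iso_congr_map, top, Plift. apply pt2_eq; cbn [qx qy px py pz]; ring.
Qed.

Theorem lemma11 (m n : nat) (F : net3) :
  (0 < m)%nat -> (0 < n)%nat ->
  is_net3 m n F ->
  (forall i j, (i < m)%nat -> (j < n)%nat -> face_nonisotropic F i j) ->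
  (deformable_iso m n F <-> deformable2 m n (top_view F)).
Proof.
  intros Hm Hn HF Hiso. split; [apply forward | apply backward]; assumption.
Qed.
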